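(* Let $G$ be a finite group and $H$ a subgroup of $G$ with $[G:H]>2$. Then the set $$f_{G-H}=\bigcup_{\substack{g,h\in G\\ g,\,h,\,g^{-1}h\in G-H}}\{\{a,ag,ah\}\mid a\in G\}\subseteq\binom{G}{3}$$ is the set of bases of a rank-$3$ matroid on the ground set $G$ (invariant under left multiplication by $G$); equivalently it corresponds to a three-dimensional tropical subrepresentation of the boolean regular representation $\mathbb{B}[G]$.
   Context: $G$ acts on $\binom{G}{3}$ (3-element subsets of $G$) by $x\cdot\{a,b,c\}=\{xa,xb,xc\}$; the sets $\{\{a,ag,ah\}\mid a\in G\}$ for $e,g,h$ pairwise distinct are the orbits. Three-dimensional tropical subrepresentations of $\mathbb{B}[G]$ (free module over the boolean semifield with basis indexed by $G$, $G$ acting by left multiplication) are equivalent to rank-3 matroids on ground set $G$ with basis set invariant under this action. *)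

(* Defs.v *)
From mathcomp Require Import all_boot all_fingroup.
Set Implicit Arguments.
Unset Strict Implicit.
Unset Printing Implicit Defensive.
Import GroupScope.
Local Open Scope group_scope.

Definition is_matroid_bases (T : finType) (E : {set T}) (Bs : {set {set T}}) : Prop :=
  [/\ Bs != set0,
      (forall B, B \in Bs -> B \subset E) &
      (forall B1 B2, B1 \in Bs -> B2 \in Bs -> forall x, x \in B1 :\: B2 ->
         exists2 y, y \in B2 :\: B1 & (y |: (B1 :\ x)) \in Bs)].

Definition is_rank_matroid_bases (T : finType) (r : nat) (E : {set T})
    (Bs : {set {set T}}) : Prop :=
  is_matroid_bases E Bs /\ (forall B, B \in Bs -> #|B| = r).

Definition left_invariant (gT : finGroupType) (G : {set gT}) (Bs : {set {set gT}}) : Prop :=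
  forall x B, x \in G -> B \in Bs -> [set x * b | b in B] \in Bs.

Definition fGH (gT : finGroupType) (G H : {set gT}) : {set {set gT}} :=
  [set B : {set gT} | [exists a in G, exists g in G :\: H, exists h in G :\: H,
     (g^-1 * h \notin H) && (B == [set a; a * g; a * h])]].

(* Main.v *)
Require Import Defs.
From mathcomp Require Import all_boot all_fingroup.
From mathcomp Require Import zify.
Import GroupScope.
Set Implicit Arguments.
Unset Strict Implicit.

Section Aux.
Variables (gT : finGroupType) (H : {group gT}).

Definition near (u v : gT) := u^-1 * v \in H.

Lemma near_sym u v : near u v = near v u.
Proof.
rewrite /near; apply/idP/idP => Hu; rewrite -groupV invMg invgK //.
Qed.

Lemma near_trans u v w : near u v -> near v w -> near u w.
Proof.
rewrite /near => h1 h2.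
have -> : u^-1 * w = (u^-1 * v) * (v^-1 * w) by rewrite mulgA mulgK.
exact: groupM.
Qed.

Lemma nn u v p : near u p -> near v p -> near u v.
Proof. move=> h1 h2; apply: near_trans h1 _; by rewrite near_sym. Qed.
Arguments nn [u v p].

Lemma far_neq u v : ~~ near u v -> u != v.
Proof. apply: contra => /eqP ->; by rewrite /near mulVg group1. Qed.
Arguments far_neq [u v].

Lemma fGH_P (G : {group gT}) B :
  reflect (exists a b c, [/\ [&& a \in G, b \in G & c \in G],
     [&& ~~ near a b, ~~ near a c & ~~ near b c] & B = [set a; b; c]])
   (B \in fGH G H).
Proof.
rewrite inE; apply: (iffP idP).
- case/exists_inP => a aG /exists_inP [g /setDP [gG gH] /exists_inP [h /setDP [hG hH] /andP [gh /eqP ->]]].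
  exists a, (a * g), (a * h); split => //.
  + by rewrite aG !groupM.
  + by rewrite /near !mulKg invMg -mulgA mulKg gH hH.
- move=> [a [b [c [/and3P [aG bG cG] /and3P [ab ac bc] ->]]]].
  apply/exists_inP; exists a => //.
  apply/exists_inP; exists (a^-1 * b); first by rewrite inE ab groupM ?groupV.
  apply/exists_inP; exists (a^-1 * c); first by rewrite inE ac groupM ?groupV.
  rewrite invMg invgK -mulgA !mulKVg.
  by rewrite bc eqxx.
Qed.

Lemma card3 a b c : ~~ near a b -> ~~ near a c -> ~~ near b c ->
  #|[set a; b; c]| = 3.
Proof.
move=> /far_neq ab /far_neq ac /far_neq bc.
rewrite -setUA cardsU1 cardsU1 cards1 !inE negb_or ab ac bc.
done.
Qed.

Lemma set3_perm1 a b c : [set a; b; c] = [set b; a; c] :> {set gT}.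
Proof. by apply/setP => z; rewrite !inE; case: (z == a); case: (z == b); case: (z == c). Qed.

Lemma set3_perm2 a b c : [set a; b; c] = [set c; a; b] :> {set gT}.
Proof. by apply/setP => z; rewrite !inE; case: (z == a); case: (z == b); case: (z == c). Qed.

Lemma exch (G : {group gT}) x p q a2 b2 c2 :
  [&& x \in G, p \in G & q \in G] ->
  [&& ~~ near x p, ~~ near x q & ~~ near p q] ->
  [&& a2 \in G, b2 \in G & c2 \in G] ->
  [&& ~~ near a2 b2, ~~ near a2 c2 & ~~ near b2 c2] ->
  x \notin [set a2; b2; c2] ->
  exists2 y, y \in [set a2; b2; c2] :\: [set x; p; q] &
     (y |: ([set x; p; q] :\ x)) \in fGH G H.
Proof.
move=> /and3P [xG pG qG] /and3P [xp xq pq] /and3P [aG bG cG] /and3P [ab ac bc] xB.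
suff [y yB [yp yq]] : exists2 y, y \in [set a2; b2; c2] & ~~ near y p /\ ~~ near y q.
  have yG : y \in G by move: yB; rewrite !inE => /orP [/orP [] | ] /eqP ->.
  exists y.
    rewrite inE yB andbT !inE !negb_or.
    have -> : y != x by apply: contraNneq xB => <-.
    by rewrite (far_neq yp) (far_neq yq).
  apply/fGH_P; exists y, p, q; split.
  - by rewrite yG pG qG.
  - by rewrite yp yq pq.
  - apply/setP => z; rewrite !inE.
    have [->|zx] := eqVneq z x; last by rewrite /= orbA.
    rewrite /=. idtac.
    idtac.
    by rewrite (negPf (far_neq xp)) (negPf (far_neq xq)) !orbF.
have [h1|h1] := boolP (~~ near a2 p && ~~ near a2 q).
  by case/andP: h1 => h1 h2; exists a2 => //; rewrite !inE eqxx.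
have [h2|h2] := boolP (~~ near b2 p && ~~ near b2 q).
  by case/andP: h2 => h2 h3; exists b2 => //; rewrite !inE eqxx orbT.
exists c2; first by rewrite !inE eqxx !orbT.
rewrite negb_and !negbK in h1; rewrite negb_and !negbK in h2.
split; apply/negP => hc.
- case/orP: h1 => h1; first by move: ac; rewrite (nn h1 hc).
  case/orP: h2 => h2; first by move: bc; rewrite (nn h2 hc).
  by move: ab; rewrite (nn h1 h2).
- case/orP: h1 => h1; last by move: ac; rewrite (nn h1 hc).
  case/orP: h2 => h2; last by move: bc; rewrite (nn h2 hc).
  by move: ab; rewrite (nn h1 h2).
Qed.

End Aux.

Theorem mainTheorem11 (gT : finGroupType) (G H : {group gT}) :
  H \subset G -> (2 < #|G : H|)%N ->
  is_rank_matroid_bases 3 G (fGH G H) /\ left_invariant G (fGH G H).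
Proof.
move=> sHG idx.
have nearM x u v : near H (x * u) (x * v) = near H u v.
  by rewrite /near invMg -mulgA (mulgA x^-1) mulVg mul1g.
split; last first.
  move=> x B xG /fGH_P [a [b [c [/and3P [aG bG cG] /and3P [ab ac bc] ->]]]].
  apply/fGH_P; exists (x * a), (x * b), (x * c); split.
  - by rewrite !groupM.
  - by rewrite !nearM ab ac bc.
  - by rewrite !imsetU !imset_set1.
split; last first.
  move=> B /fGH_P [a [b [c [_ /and3P [ab ac bc] ->]]]]; exact: (card3 ab ac bc).
split.
- have : G :\: H != set0.
    rewrite setD_eq0; apply/negP => sGH.
    have := Lagrange sHG; have := subset_leq_card sGH; have := cardG_gt0 H; nia.
  case/set0Pn => g /setDP [gG gH].
  have : G :\: (H :|: g *: H) != set0.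
    rewrite setD_eq0; apply/negP => sGH.
    have := subset_leq_card sGH; rewrite cardsU (card_lcoset H g : #|g *: H| = #|H|) => h1.
    have : (3 * #|H| <= #|G|)%N by rewrite -(Lagrange sHG) (mulnC 3) leq_mul2l idx orbT.
    move: h1 => /leq_trans /(_ (leq_subr _ _)) h1.
    have := cardG_gt0 H; lia.
  case/set0Pn => h /setDP [hG]; rewrite inE negb_or mem_lcoset => /andP [hH ghH].
  apply/set0Pn; exists [set 1; g; h]; apply/fGH_P; exists 1, g, h; split.
  + by rewrite group1 gG hG.
  + by rewrite /near invg1 !mul1g gH hH ghH.
  + by [].
- move=> B /fGH_P [a [b [c [/and3P [aG bG cG] _ ->]]]].
  by apply/subsetP => z; rewrite !inE => /orP [/orP [] | ] /eqP ->.
- move=> B1 B2 /fGH_P [a [b [c [G1 /and3P [ab ac bc] ->]]]].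
  move=> /fGH_P [a2 [b2 [c2 [G2 F2 ->]]]] x.
  rewrite inE => /andP [xB2 xB1]; rewrite !inE in xB1.
  case/orP: xB1 => [/orP [] | ] /eqP ?; subst x.
  + apply: exch => //.
    by rewrite ab ac bc.
  + rewrite (set3_perm1 a b c); apply: exch => //.
    * by case/and3P: G1 => -> -> ->.
    * by rewrite near_sym ab bc ac.
  + rewrite (set3_perm2 a b c); apply: exch => //.
    * by case/and3P: G1 => -> -> ->.
    * by rewrite (near_sym _ c a) (near_sym _ c b) ac bc ab.
Qed.
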